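(* Let $X, B_1, \dots, B_n$ be $d\times d$ symmetric positive definite matrices and let $\phi(\alpha) := \delta_R^2\big(\sum_{i=1}^n \alpha_i B_i, X\big)$ for $\alpha \in \mathbb{R}^n$. Then $\phi$ is convex on the set $$\mathcal{A} := \Big\{\alpha \in \mathbb{R}^n \;\Big|\; \sum_{i=1}^n \alpha_i B_i \preceq X \text{ and } \alpha \ge 0\Big\}.$$
   Context: For symmetric positive definite $X, Y$, $\delta_R(X,Y) = \|\log(X^{-1/2} Y X^{-1/2})\|_F$ with $\log$ the principal matrix logarithm and $\|\cdot\|_F$ the Frobenius norm; $\phi(\alpha)$ is defined when $\sum_i \alpha_i B_i$ is positive definite. $\preceq$ denotes the Löwner order ($A \preceq B$ iff $B - A$ is positive semidefinite), and $\alpha \ge 0$ means entrywise nonnegativity. *)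

(* Defs.v *)
From HB Require Import structures.
From mathcomp Require Import all_boot all_order all_algebra.
From mathcomp Require Import all_classical all_reals all_analysis.
From Stdlib Require Import ClassicalEpsilon.
Set Implicit Arguments. Unset Strict Implicit. Unset Printing Implicit Defensive.
Import Order.TTheory GRing.Theory Num.Theory.
Local Open Scope ring_scope.

Section Defs.
Variable R : realType.

Definition symmetric_mx (d : nat) (M : 'M[R]_d) : Prop := M^T = M.

Definition spd (d : nat) (M : 'M[R]_d) : Prop :=
  symmetric_mx M /\ forall x : 'cV[R]_d, x != 0 -> 0 < (x^T *m M *m x) 0 0.

Definition psd (d : nat) (M : 'M[R]_d) : Prop :=
  symmetric_mx M /\ forall x : 'cV[R]_d, 0 <= (x^T *m M *m x) 0 0.

Definition loewner_le (d : nat) (A B : 'M[R]_d) : Prop := psd (B - A).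

Definition spec_dec (d : nat) (M : 'M[R]_d) (p : 'M[R]_d * 'rV[R]_d) : Prop :=
  p.1 *m p.1^T = 1%:M /\ M = p.1 *m diag_mx p.2 *m p.1^T.

(* spectral functional calculus f(M) := Q diag(f v) Q^T for a symmetric M
   (meaningful when M admits an orthogonal diagonalization, e.g. M symmetric) *)
Definition mx_fun (d : nat) (f : R -> R) (M : 'M[R]_d) : 'M[R]_d :=
  let p := epsilon (inhabits (1%:M, 0)) (spec_dec M) in
  p.1 *m diag_mx (map_mx f p.2) *m p.1^T.

Definition logm (d : nat) (M : 'M[R]_d) : 'M[R]_d := mx_fun (@ln R) M.

Definition invsqrtm (d : nat) (M : 'M[R]_d) : 'M[R]_d :=
  mx_fun (fun x => (Num.sqrt x)^-1) M.

Definition frob (d : nat) (M : 'M[R]_d) : R :=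
  Num.sqrt (\sum_(i < d) \sum_(j < d) M i j ^+ 2).

Definition deltaR (d : nat) (X Y : 'M[R]_d) : R :=
  frob (logm (invsqrtm X *m Y *m invsqrtm X)).

Definition wsum (d n : nat) (B : 'I_n -> 'M[R]_d) (alpha : 'rV[R]_n) : 'M[R]_d :=
  \sum_(i < n) alpha 0 i *: B i.

Definition phi (d n : nat) (B : 'I_n -> 'M[R]_d) (X : 'M[R]_d) (alpha : 'rV[R]_n) : R :=
  deltaR (wsum B alpha) X ^+ 2.

(* the set A, intersected with the domain of phi (sum alpha_i B_i positive definite) *)
Definition setA (d n : nat) (B : 'I_n -> 'M[R]_d) (X : 'M[R]_d) (alpha : 'rV[R]_n) : Prop :=
  loewner_le (wsum B alpha) X /\ (forall i, 0 <= alpha 0 i) /\ spd (wsum B alpha).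

End Defs.

(* Main.v *)
Require Import Defs.
From HB Require Import structures.
From mathcomp Require Import all_boot all_order all_algebra.
From mathcomp Require Import all_classical all_reals all_analysis.
From mathcomp Require Import complex ring lra.
From Stdlib Require Import ClassicalEpsilon.
Import Order.TTheory GRing.Theory Num.Theory.
Local Open Scope ring_scope.
Set Implicit Arguments. Unset Strict Implicit. Unset Printing Implicit Defensive.

Lemma trmx11 (T : Type) (M : 'M[T]_1) : M^T = M.
Proof. by apply/matrixP => i j; rewrite !ord1 mxE. Qed.

Lemma sym_real_eigen (R : rcfType) n (A : 'M[R]_(n.+1)) :
  A^T = A -> exists a : R, eigenvalue A a.
Proof.
move=> sA.
pose f := real_complex R.
pose cj := (@conjc R : R[i] -> R[i]).
have : size (char_poly (map_mx f A)) != 1%N by rewrite size_char_poly.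
case/closed_rootP => z; rewrite -eigenvalue_root_char => /eigenvalueP [v vA nz].
pose vc := map_mx cj v.
pose Af := map_mx f A.
have AfT : Af^T = Af by rewrite /Af map_trmx sA.
have Afc : map_mx cj Af = Af.
  by apply/matrixP => i j; rewrite !mxE /cj /f conjc_real.
have sym1 : forall (M : 'M[R[i]]_(n.+1)), M^T = M -> map_mx cj M = M ->
    cj ((v *m M *m vc^T) 0 0) = (v *m M *m vc^T) 0 0.
  move=> M MT Mc.
  have E : cj ((v *m M *m vc^T) 0 0) = (map_mx cj (v *m M *m vc^T)) 0 0.
    by rewrite [RHS]mxE.
  rewrite E.
  rewrite !map_mxM Mc map_trmx.
  have tE : forall (B : 'M[R[i]]_1), B 0 0 = B^T 0 0 by move=> B; rewrite mxE.
  have cc : forall m k (B : 'M[R[i]]_(m,k)), map_mx cj (map_mx cj B) = B.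
    by move=> m k B; apply/matrixP => i j; rewrite !mxE /cj conjcK.
  rewrite [LHS]tE !trmx_mul.
  rewrite MT mulmxA /vc -!map_trmx trmxK.
  by rewrite cc.
have e1 : (v *m Af *m vc^T) 0 0 = z * (v *m vc^T) 0 0.
  by rewrite vA -scalemxAl mxE.
have N1 : cj ((v *m vc^T) 0 0) = (v *m vc^T) 0 0.
  have c1 : map_mx cj (1%:M : 'M[R[i]]_(n.+1)) = 1%:M.
    by apply/matrixP=> i j; rewrite !mxE; case: (i == j); rewrite /cj /= ?oppr0.
  by have := sym1 1%:M (trmx1 _ _) c1; rewrite mulmx1.
have Nnz : (v *m vc^T) 0 0 != 0.
  apply/negP => /eqP N0; move/negP: nz; apply; apply/eqP/rowP => j.
  have pos : forall i : 'I_(n.+1), true -> 0 <= v 0 i * vc^T i 0.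
    by move=> i _; rewrite !mxE; exact: mulcJ_ge0.
  move: N0; rewrite mxE => /(psumr_eq0P pos) /(_ j isT).
  by rewrite !mxE => /eqP; rewrite mulf_eq0 conjc_eq0 orbb => /eqP ->.
have zc : cj z = z.
  have := sym1 Af AfT Afc; rewrite e1.
  have cjM : forall a b, cj (a * b) = cj a * cj b.
    by move=> a b; rewrite /cj rmorphM.
  rewrite cjM N1 => /eqP.
  rewrite -subr_eq0 -mulrBl mulf_eq0 (negbTE Nnz) orbF subr_eq0 => /eqP //.
have zR : z = f (complex.Re z).
  move: zc; rewrite /cj /f; case: (z) => a b /= [] => /eqP.
  by rewrite eq_sym -subr_eq0 opprK -mulr2n mulrn_eq0 /= => /eqP ->.
exists (complex.Re z); rewrite eigenvalue_root_char -(fmorph_root f) map_char_poly.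
rewrite [X in root _ X](_ : _ = z); last by rewrite {2}zR.
by rewrite -eigenvalue_root_char; apply/eigenvalueP; exists v.
Qed.
Lemma mxsq_entry (R : pzRingType) k (h : 'rV[R]_k) :
  (h *m h^T) 0 0 = \sum_j h 0 j ^+ 2.
Proof. by rewrite mxE; apply: eq_bigr => j _; rewrite mxE expr2. Qed.

Lemma mxsq_ge0 (R : realDomainType) k (h : 'rV[R]_k) : 0 <= (h *m h^T) 0 0.
Proof. by rewrite mxsq_entry; apply: sumr_ge0 => j _; exact: sqr_ge0. Qed.

Lemma mxsq_eq0 (R : realDomainType) k (h : 'rV[R]_k) :
  (h *m h^T) 0 0 = 0 -> h = 0.
Proof.
rewrite mxsq_entry => /psumr_eq0P H; apply/rowP => j; rewrite mxE.
by apply/eqP; rewrite -sqrf_eq0; apply/eqP/H => // i _; exact: sqr_ge0.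
Qed.

Lemma householder (R : realFieldType) n (u : 'rV[R]_(n.+1)) :
  u *m u^T = 1%:M -> exists H : 'M[R]_(n.+1), H *m H^T = 1%:M /\ 'e_0 *m H = u.
Proof.
move=> uu.
set e : 'rV[R]_(n.+1) := 'e_0.
set h := e - u.
set s := (h *m h^T) 0 0.
set c := 2 / s.
set X := h^T *m h.
exists (1%:M - c *: X).
have hh : h *m h^T = s%:M by rewrite [LHS]mx11_scalar.
have XX : X *m X = s *: X.
  by rewrite /X mulmxA -(mulmxA h^T) hh mul_mx_scalar -scalemxAl.
have HT : (1%:M - c *: X)^T = 1%:M - c *: X.
  by rewrite linearB /= linearZ /= trmx_mul trmxK trmx1.
have eu : forall v : 'rV[R]_(n.+1), e *m v^T = (v 0 0)%:M.
  by move=> v; rewrite [LHS]mx11_scalar -rowE !mxE.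
split.
  rewrite HT mulmxBr mulmx1 mulmxBl mul1mx -scalemxAl -scalemxAr XX !scalerA.
  have -> : c * c * s = c + c.
    have [s0|s0] := eqVneq s 0; first by rewrite /c s0 invr0 !mulr0 addr0.
    by rewrite /c; field.
  by rewrite scalerDl opprB addrK subrK.
rewrite mulmxBr mulmx1 -scalemxAr mulmxA eu mul_scalar_mx scalerA.
have [s0|s0] := eqVneq s 0.
  have h0 : h = 0 by apply: mxsq_eq0.
  by rewrite h0 scaler0 subr0; move/eqP: h0; rewrite subr_eq0 => /eqP.
have h00 : h 0 0 = 1 - u 0 0 by rewrite !mxE.
have sE : s = 2 * h 0 0.
  have hT : h^T = e^T - u^T by rewrite /h linearB.
  have ue : u *m e^T = (u 0 0)%:M.
    by rewrite -[u *m e^T]trmxK trmx_mul trmxK eu tr_scalar_mx.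
  rewrite /s hT mulmxBr /h !mulmxBl uu ue !eu !mxE /=.
  by rewrite !mulr1n; ring.
have -> : c * h 0 0 = 1.
  have hnz : h 0 0 != 0 by move: s0; rewrite sE; apply: contra_neq => ->; rewrite mulr0.
  rewrite /c sE.
  by field.
by rewrite scale1r /h opprB addrC subrK.
Qed.

Lemma sym_orth_diag (R : rcfType) n (A : 'M[R]_n) : A^T = A ->
  exists Q : 'M[R]_n, Q *m Q^T = 1%:M /\ is_diag_mx (Q *m A *m Q^T).
Proof.
elim: n A => [|n IH] A sA.
  exists 1%:M; split; first by rewrite trmx1 mulmx1.
  by apply/is_diag_mxP => [[]].
have [a /eigenvalueP [w wA wnz]] := sym_real_eigen sA.
set r := (w *m w^T) 0 0.
have r0 : 0 < r.
  rewrite lt_def mxsq_ge0 andbT; apply: contraNneq wnz => /mxsq_eq0 ->; done.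
set u := (Num.sqrt r)^-1 *: w.
have uu : u *m u^T = 1%:M.
  rewrite /u linearZ /= -scalemxAl -scalemxAr scalerA [w *m w^T]mx11_scalar -/r.
  rewrite scale_scalar_mx; congr (_%:M).
  rewrite -invrM ?unitfE ?sqrtr_eq0 -?ltNge // -expr2 sqr_sqrtr ?ltW //.
  by rewrite mulVf // gt_eqF.
have uA : u *m A = a *: u by rewrite -scalemxAl wA !scalerA mulrC.
have [H [HH eH]] := householder uu.
set B := H *m A *m H^T.
have BT : B^T = B by rewrite /B !trmx_mul trmxK sA mulmxA.
have eB : ('e_0 : 'rV[R]_(n.+1)) *m B = a *: 'e_0.
  by rewrite /B !mulmxA eH uA -scalemxAl -eH -mulmxA HH mulmx1.
have hB : B = H *m A *m H^T by [].
clearbody B.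
have B0 : forall j : 'I_n, B 0 (rshift 1 j) = 0.
  move=> j; have /matrixP/(_ 0 (rshift 1 j)) := eB.
  by rewrite /= -rowE !mxE => ->; rewrite mulr0.
pose B' : 'M[R]_(1 + n) := B.
have l0 : lshift n (0 : 'I_1) = 0 :> 'I_(1 + n) by apply/val_inj.
have Bur : ursubmx B' = 0.
  by apply/matrixP => i j; rewrite !mxE ord1 l0; apply: B0.
have Bdl : dlsubmx B' = 0.
  apply/matrixP => i j; rewrite !mxE ord1 l0 -[B' _ _]/(B _ _) -BT mxE; apply: B0.
set A' := drsubmx B'.
have A'T : A'^T = A'.
  by apply/matrixP => i j; rewrite !mxE -[B' _ _]/(B _ _) -BT mxE.
have [Q' [QQ' dQ']] := IH A' A'T.
pose P : 'M[R]_(1 + n) := block_mx 1%:M 0 0 Q'.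
have PT : P^T = block_mx 1%:M 0 0 Q'^T by rewrite /P tr_block_mx trmx1 !trmx0.
have PP : P *m P^T = 1%:M.
  rewrite PT /P mulmx_block !mulmx0 !mul0mx !addr0 !add0r mulmx1 QQ'.
  by rewrite -scalar_mx_block.
have PBP : P *m B' *m P^T = block_mx (ulsubmx B') 0 0 (Q' *m A' *m Q'^T).
  rewrite -{1}(submxK B') Bur Bdl PT /P mulmx_block.
  rewrite !mulmx0 !mul0mx !addr0 !add0r mul1mx mulmx_block.
  by rewrite !mulmx0 !mul0mx !addr0 !add0r mulmx1.
exists (P *m H); split.
  rewrite trmx_mul mulmxA -(mulmxA P) HH mulmx1; exact: PP.
have -> : P *m H *m A *m (P *m H)^T = P *m B' *m P^T.
  by rewrite trmx_mul /B' hB !mulmxA.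
have : is_diag_mx (P *m B' *m P^T).
  rewrite PBP is_diag_block_mx // !eqxx dQ' /= andbT.
  by apply/is_diag_mxP => i j; rewrite !ord1.
done.
Qed.

Section A.
Variable R : realType.

Lemma orthT d (P : 'M[R]_d) : P *m P^T = 1%:M -> P^T *m P = 1%:M.
Proof. exact: mulmx1C. Qed.

Lemma spec_ex d (M : 'M[R]_d) : symmetric_mx M -> exists p, spec_dec M p.
Proof.
rewrite /symmetric_mx => sM.
have [Q [QQ /diag_mxP [v hv]]] := sym_orth_diag sM.
exists (Q^T, v); split => /=; first by rewrite trmxK; exact: orthT.
rewrite trmxK -hv !mulmxA (orthT QQ) mul1mx -mulmxA (orthT QQ) mulmx1 //.
Qed.

Definition eps_dec d (M : 'M[R]_d) := epsilon (inhabits (1%:M, 0)) (spec_dec M).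

Lemma eps_decP d (M : 'M[R]_d) : symmetric_mx M -> spec_dec M (eps_dec M).
Proof. by move=> sM; apply: epsilon_spec; exact: spec_ex. Qed.

Lemma mx_funE d f (M : 'M[R]_d) :
  mx_fun f M = (eps_dec M).1 *m diag_mx (map_mx f (eps_dec M).2) *m (eps_dec M).1^T.
Proof. by []. Qed.

Lemma pdp_mul d (P : 'M[R]_d) (a b : 'rV[R]_d) : P^T *m P = 1%:M ->
  P *m diag_mx a *m P^T *m (P *m diag_mx b *m P^T)
  = P *m diag_mx (\row_j (a 0 j * b 0 j)) *m P^T.
Proof.
move=> PP; rewrite !mulmxA -(mulmxA _ P^T) PP mulmx1 -(mulmxA _ (diag_mx a)).
by rewrite mulmx_diag.
Qed.

Lemma pdp_tr d (P : 'M[R]_d) (a : 'rV[R]_d) :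
  (P *m diag_mx a *m P^T)^T = P *m diag_mx a *m P^T.
Proof. by rewrite !trmx_mul trmxK tr_diag_mx mulmxA. Qed.

Lemma pdp1 d (P : 'M[R]_d) (a : 'rV[R]_d) : P *m P^T = 1%:M ->
  (forall j, a 0 j = 1) -> P *m diag_mx a *m P^T = 1%:M.
Proof.
move=> PP a1; have -> : a = const_mx 1 by apply/rowP => j; rewrite a1 mxE.
by rewrite diag_const_mx mulmx1.
Qed.

Lemma pdp_diag d (M : 'M[R]_d) p : spec_dec M p ->
  p.1^T *m M *m p.1 = diag_mx p.2.
Proof.
case=> PP ->; have PP' := orthT PP.
by rewrite !mulmxA PP' mul1mx -mulmxA PP' mulmx1.
Qed.

Lemma col_qf d (U M : 'M[R]_d) k :
  (U^T *m M *m U) k k = ((col k U)^T *m M *m col k U) 0 0.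
Proof.
rewrite !mxE; apply: eq_bigr => j _; rewrite !mxE; congr (_ * _).
by apply: eq_bigr => i _; rewrite !mxE.
Qed.

Lemma col_unit d (U : 'M[R]_d) k : U^T *m U = 1%:M ->
  ((col k U)^T *m col k U) 0 0 = 1.
Proof.
move=> UU; have := col_qf U 1%:M k; rewrite !mulmx1 UU => <-.
by rewrite mxE; case: eqP.
Qed.

Lemma spd_sym d (M : 'M[R]_d) : spd M -> symmetric_mx M.
Proof. by case. Qed.

Lemma spd_eig d (M : 'M[R]_d) p : spd M -> spec_dec M p -> forall j, 0 < p.2 0 j.
Proof.
move=> [_ pos] sd j; have PP' := orthT sd.1.
have := pdp_diag sd => /matrixP /(_ j j); rewrite col_qf [diag_mx _ _ _]mxE eqxx mulr1n => <-.
apply: pos; apply/eqP => c0; have := col_unit j PP'; rewrite c0 mulmx0 mxE => /eqP.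
by rewrite eq_sym oner_eq0.
Qed.


Lemma spec_inv d (M : 'M[R]_d) p q (f : R -> R) :
  spec_dec M p -> spec_dec M q -> \sum_j f (p.2 0 j) = \sum_j f (q.2 0 j).
Proof.
move=> sp sq.
have PP := sp.1; have QQ := sq.1; have PP' := orthT PP; have QQ' := orthT QQ.
set C := p.1^T *m q.1.
have CC : C *m C^T = 1%:M.
  by rewrite /C trmx_mul trmxK mulmxA -(mulmxA _ q.1) QQ mulmx1 PP'.
have CC' := orthT CC.
have comm : diag_mx p.2 *m C = C *m diag_mx q.2.
  rewrite -(pdp_diag sp) -(pdp_diag sq) /C.
  rewrite -!mulmxA (mulmxA p.1) PP mul1mx.
  by rewrite !mulmxA -(mulmxA _ q.1) QQ mulmx1.
have ent : forall i j, p.2 0 i * C i j = C i j * q.2 0 j.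
  move=> i j; move/matrixP: comm => /(_ i j).
  by rewrite mul_diag_mx mul_mx_diag !mxE.
have rowsum : forall i, \sum_j C i j ^+ 2 = 1.
  move=> i; move/matrixP: CC => /(_ i i); rewrite !mxE eqxx mulr1n => <-.
  by apply: eq_bigr => j _; rewrite [C^T _ _]mxE expr2.
have colsum : forall j, \sum_i C i j ^+ 2 = 1.
  move=> j; move/matrixP: CC' => /(_ j j); rewrite [1%:M _ _]mxE eqxx mulr1n mxE => <-.
  by apply: eq_bigr => i _; rewrite [C^T _ _]mxE expr2.
transitivity (\sum_i \sum_j C i j ^+ 2 * f (p.2 0 i)).
  by apply: eq_bigr => i _; rewrite -mulr_suml rowsum mul1r.
transitivity (\sum_i \sum_j C i j ^+ 2 * f (q.2 0 j)).
  apply: eq_bigr => i _; apply: eq_bigr => j _.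
  have [c0|c0] := eqVneq (C i j) 0; first by rewrite c0 expr0n /= !mul0r.
  have : p.2 0 i = q.2 0 j.
    by apply: (mulIf c0); rewrite ent mulrC.
  by move=> ->.
rewrite exchange_big; apply: eq_bigr => j _.
by rewrite -mulr_suml colsum mul1r.
Qed.

Lemma frob_pdp d (P : 'M[R]_d) (c : 'rV[R]_d) : P^T *m P = 1%:M ->
  frob (P *m diag_mx c *m P^T) ^+ 2 = \sum_j c 0 j ^+ 2.
Proof.
move=> PP; rewrite /frob sqr_sqrtr; last first.
  by apply: sumr_ge0 => i _; apply: sumr_ge0 => j _; exact: sqr_ge0.
set M := P *m diag_mx c *m P^T.
transitivity (\tr (M *m M^T)).
  rewrite /mxtrace; apply: eq_bigr => i _; rewrite [(M *m M^T) _ _]mxE.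
  by apply: eq_bigr => j _; rewrite [M^T _ _]mxE expr2.
rewrite /M pdp_tr pdp_mul // mxtrace_mulC mulmxA PP mul1mx.
rewrite /mxtrace; apply: eq_bigr => j _; rewrite !mxE eqxx mulr1n expr2 //.
Qed.


Lemma isqrt_facts d (M : 'M[R]_d) : spd M -> exists Rm : 'M[R]_d,
  [/\ Rm^T = Rm, (invsqrtm M)^T = invsqrtm M, invsqrtm M *m Rm = 1%:M,
      Rm *m invsqrtm M = 1%:M & Rm *m Rm = M].
Proof.
move=> sM; have sd := eps_decP (spd_sym sM).
set P := (eps_dec M).1 in sd *; set v := (eps_dec M).2 in sd *.
have v0 := spd_eig sM sd.
have PP := sd.1; have PP' := orthT PP.
have SE : invsqrtm M = P *m diag_mx (map_mx (fun x => (Num.sqrt x)^-1) v) *m P^T.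
  by [].
exists (P *m diag_mx (\row_j Num.sqrt (v 0 j)) *m P^T); split.
- exact: pdp_tr.
- by rewrite SE pdp_tr.
- rewrite SE pdp_mul //; apply: pdp1 => // j; rewrite !mxE mulVf //.
  by rewrite sqrtr_eq0 -ltNge v0.
- rewrite SE pdp_mul //; apply: pdp1 => // j; rewrite !mxE mulfV //.
  by rewrite sqrtr_eq0 -ltNge v0.
- rewrite pdp_mul // [in RHS]sd.2; congr (_ *m diag_mx _ *m _).
  by apply/rowP => j; rewrite !mxE -expr2 sqr_sqrtr // ltW.
Qed.


Lemma m5 d (A B C D E : 'M[R]_d) : A *m B *m C *m D *m E = A *m (B *m C *m D) *m E.
Proof. by rewrite !mulmxA. Qed.

Lemma m7 d (A B C D E F G : 'M[R]_d) :
  A *m B *m C *m D *m E *m F *m G = A *m B *m (C *m D *m E) *m F *m G.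
Proof. by rewrite !mulmxA. Qed.

Lemma inv_uniq d (A B C : 'M[R]_d) : A *m B = 1%:M -> A *m C = 1%:M -> C = B.
Proof.
move=> AB AC; have BA := mulmx1C AB.
by rewrite -[C]mul1mx -BA -mulmxA AC mulmx1.
Qed.

Lemma spd_conj d (W S Rm : 'M[R]_d) : spd W -> S^T = S -> Rm *m S = 1%:M ->
  spd (S *m W *m S).
Proof.
move=> [sW pW] ST RS; split.
  by rewrite /symmetric_mx !trmx_mul ST sW mulmxA.
move=> x xnz; have -> : x^T *m (S *m W *m S) *m x = (S *m x)^T *m W *m (S *m x).
  by rewrite trmx_mul ST !mulmxA.
apply: pW; apply: contraNneq xnz => Sx0.
by rewrite -[x]mul1mx -RS -mulmxA Sx0 mulmx0.
Qed.

Lemma phi_eq d (W X : 'M[R]_d) q : spd W -> spd X ->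
  spec_dec (invsqrtm X *m W *m invsqrtm X) q ->
  deltaR W X ^+ 2 = \sum_j ln (q.2 0 j) ^+ 2.
Proof.
move=> sW sX sq.
have [RX [RXT SXT SR RS RR]] := isqrt_facts sX.
have [RW [RWT SWT SRw RSw RRw]] := isqrt_facts sW.
set SX := invsqrtm X in SXT SR RS sq *.
set SW := invsqrtm W in SWT SRw RSw *.
have eSW : SW = invsqrtm W by [].
clearbody SX SW.
set K := SX *m RW.
have Y2E : SX *m W *m SX = K *m K^T.
  by rewrite /K trmx_mul RWT SXT -RRw !mulmxA.
have eK : K = SX *m RW by [].
clearbody K.
have sY2 : spd (SX *m W *m SX) by apply: (spd_conj sW SXT RS).
have d0 := spd_eig sY2 sq.
set Q := q.1 in sq *; set dv := q.2 in sq d0 *.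
have QQ := sq.1; have QQ' := orthT QQ.
set Dg := diag_mx (\row_j (Num.sqrt (dv 0 j))^-1).
set V := K^T *m Q *m Dg.
have sqn : forall j, Num.sqrt (dv 0 j) != 0.
  by move=> j; rewrite sqrtr_eq0 -ltNge d0.
have VV' : V^T *m V = 1%:M.
  rewrite /V !trmx_mul trmxK /Dg tr_diag_mx.
  rewrite !mulmxA -(mulmxA _ K) -Y2E m5.
  rewrite (pdp_diag sq) !mulmx_diag -diag_const_mx; congr diag_mx.
  apply/rowP => j; rewrite !mxE -mulrA mulrC -mulrA -invrM ?unitfE //.
  by rewrite -expr2 sqr_sqrtr ?ltW // mulfV // gt_eqF.
have VV : V *m V^T = 1%:M by apply: mulmx1C.
set ev := \row_j (dv 0 j)^-1.
have KK : K^T *m K = V *m diag_mx dv *m V^T.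
  rewrite /V !trmx_mul trmxK /Dg tr_diag_mx.
  rewrite !mulmxA m7.
  rewrite !mulmx_diag.
  rewrite [X in _ *m diag_mx X *m _](_ : _ = const_mx 1); last first.
    apply/rowP => j; rewrite !mxE mulrC mulrA -invrM ?unitfE //.
    by rewrite -expr2 sqr_sqrtr ?ltW // mulVf // gt_eqF.
  by rewrite diag_const_mx mulmx1 -(mulmxA _ Q) QQ mulmx1.
set Y1 := SW *m X *m SW.
have KY : K^T *m K *m Y1 = 1%:M.
  rewrite eK /Y1 trmx_mul RWT SXT -RR.
  have -> : RW *m SX *m (SX *m RW) *m (SW *m (RX *m RX) *m SW)
     = RW *m (SX *m (SX *m (RW *m SW) *m RX) *m RX) *m SW by rewrite !mulmxA.
  by rewrite RSw mulmx1 SR mulmx1 SR mulmx1 RSw.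
have KT : K^T *m K *m (V *m diag_mx ev *m V^T) = 1%:M.
  rewrite KK pdp_mul //; apply: pdp1 => // j.
  by rewrite !mxE mulfV // gt_eqF.
have Y1E : Y1 = V *m diag_mx ev *m V^T.
  exact: inv_uniq KT KY.
have sdY1 : spec_dec Y1 (V, ev) by split.
have symY1 : symmetric_mx Y1 by rewrite /symmetric_mx Y1E pdp_tr.
have sde := eps_decP symY1.
rewrite /deltaR -eSW -/Y1 /logm mx_funE frob_pdp; last exact: orthT sde.1.
transitivity (\sum_j (fun x => ln x ^+ 2) ((eps_dec Y1).2 0 j)).
  by apply: eq_bigr => j _; rewrite mxE.
have := spec_inv (fun x => ln x ^+ 2) sde sdY1; rewrite /= => ->.
apply: eq_bigr => j _.
by rewrite mxE lnV ?sqrrN // posrE.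
Qed.


Lemma ln_tan (y m : R) : 0 < y -> 0 < m -> ln y <= ln m + (y / m - 1).
Proof.
move=> y0 m0; have ym : 0 < y / m by rewrite divr_gt0.
rewrite {1}(_ : y = m * (y / m)); last by rewrite mulrC divfK // gt_eqF.
rewrite lnM ?posrE // lerD2l.
rewrite {1}(_ : y / m = 1 + (y / m - 1)); last by rewrite addrC subrK.
by apply: le_ln1Dx; rewrite ltrBrDl subrr.
Qed.

Lemma jensen (I : finType) (c mu : I -> R) :
  (forall i, 0 <= c i) -> \sum_i c i = 1 -> (forall i, 0 < mu i) ->
  0 < \sum_i c i * mu i -> \sum_i c i * mu i <= 1 ->
  ln (\sum_i c i * mu i) ^+ 2 <= \sum_i c i * ln (mu i) ^+ 2.
Proof.
move=> c0 c1 mu0; set a := \sum_i c i * mu i => a0 a1.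
set L := \sum_i c i * ln (mu i).
have La : L <= ln a.
  apply: (le_trans (y := \sum_i c i * (ln a + (mu i / a - 1)))).
    by apply: ler_sum => i _; apply: ler_wpM2l => //; apply: ln_tan.
  have -> : \sum_i c i * (ln a + (mu i / a - 1))
           = (\sum_i c i) * ln a + (\sum_i c i * mu i) / a - \sum_i c i.
    rewrite mulr_suml mulr_suml -big_split /= -sumrB; apply: eq_bigr => i _.
    by rewrite mulrDr mulrBr mulr1 mulrA addrA.
  by rewrite -/a c1 mul1r mulfV ?gt_eqF // addrK.
have la0 : ln a <= 0 by apply: ln_le0.
have e1 : ln a ^+ 2 <= L ^+ 2.
  have h : 0 <= (ln a - L) * (- ln a - L) by apply: mulr_ge0; lra.
  have -> : L ^+ 2 = ln a ^+ 2 + (ln a - L) * (- ln a - L) by ring.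
  lra.
apply: (le_trans e1).
have : 0 <= \sum_i c i * (ln (mu i) - L) ^+ 2.
  by apply: sumr_ge0 => i _; apply: mulr_ge0 => //; apply: sqr_ge0.
have -> : \sum_i c i * (ln (mu i) - L) ^+ 2
   = \sum_i c i * ln (mu i) ^+ 2 - (L *+ 2) * L + L ^+ 2 * \sum_i c i.
  rewrite mulr_sumr mulr_sumr -sumrB -big_split /=; apply: eq_bigr => i _.
  by rewrite /L; ring.
rewrite c1 mulr1; lra.
Qed.

Lemma conv_pos (t x y : R) : 0 <= t -> t <= 1 -> 0 < x -> 0 < y ->
  0 < (1 - t) * x + t * y.
Proof. move=> *; nra. Qed.

Lemma two_point (t x y : R) : 0 <= t -> t <= 1 -> 0 < x <= 1 -> 0 < y <= 1 ->
  ln ((1 - t) * x + t * y) ^+ 2 <= (1 - t) * ln x ^+ 2 + t * ln y ^+ 2.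
Proof.
move=> t0 t1 /andP[x0 x1] /andP[y0 y1].
pose c := fun b : bool => if b then t else 1 - t.
pose mu := fun b : bool => if b then y else x.
have := @jensen bool c mu.
rewrite !big_bool /c /mu /= => H.
rewrite [X in ln X](addrC) [X in _ <= X]addrC; apply: H => //.
- by case => //; rewrite subr_ge0.
- by rewrite addrC subrK.
- by case.
- by rewrite addrC; apply: conv_pos.
- nra.
Qed.


Lemma comb_entry m k (a b : R) (A B : 'M[R]_(m, k)) i j :
  (a *: A + b *: B) i j = a * A i j + b * B i j.
Proof. by rewrite !mxE. Qed.

Lemma pinch d (Y Q : 'M[R]_d) p : spec_dec Y p -> (forall j, 0 < p.2 0 j <= 1) ->
  Q^T *m Q = 1%:M -> (forall k, 0 < (Q^T *m Y *m Q) k k <= 1) ->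
  \sum_k ln ((Q^T *m Y *m Q) k k) ^+ 2 <= \sum_j ln (p.2 0 j) ^+ 2.
Proof.
move=> sd mu01 QQ a01; have QQ' := mulmx1C QQ; have PP := sd.1.
set C := Q^T *m p.1.
have CC : C *m C^T = 1%:M.
  by rewrite /C trmx_mul trmxK mulmxA -(mulmxA _ p.1) PP mulmx1 QQ.
have CC' := mulmx1C CC.
have YE : Q^T *m Y *m Q = C *m diag_mx p.2 *m C^T.
  by rewrite {1}sd.2 /C trmx_mul trmxK !mulmxA.
have ak : forall k, (Q^T *m Y *m Q) k k = \sum_j C k j ^+ 2 * p.2 0 j.
  move=> k; rewrite YE mul_mx_diag [LHS]mxE; apply: eq_bigr => j _.
  by rewrite !mxE expr2 mulrAC.
have rowsum : forall k, \sum_j C k j ^+ 2 = 1.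
  move=> k; move/matrixP: CC => /(_ k k); rewrite [1%:M _ _]mxE eqxx mulr1n mxE => <-.
  by apply: eq_bigr => j _; rewrite [C^T _ _]mxE expr2.
have colsum : forall j, \sum_k C k j ^+ 2 = 1.
  move=> j; move/matrixP: CC' => /(_ j j); rewrite [1%:M _ _]mxE eqxx mulr1n mxE => <-.
  by apply: eq_bigr => i _; rewrite [C^T _ _]mxE expr2.
apply: (le_trans (y := \sum_k \sum_j C k j ^+ 2 * ln (p.2 0 j) ^+ 2)).
  apply: ler_sum => k _; rewrite ak; apply: jensen => //.
  - by move=> j; apply: sqr_ge0.
  - by move=> j; case/andP: (mu01 j).
  - by rewrite -ak; case/andP: (a01 k).
  - by rewrite -ak; case/andP: (a01 k).
rewrite exchange_big /=; apply: ler_sum => j _.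
by rewrite -mulr_suml colsum mul1r.
Qed.

Lemma Ybound d (X W SX : 'M[R]_d) : spd W -> psd (X - W) -> SX^T = SX ->
  SX *m X *m SX = 1%:M -> forall U : 'M[R]_d, U^T *m U = 1%:M ->
  forall k, 0 < (U^T *m (SX *m W *m SX) *m U) k k <= 1.
Proof.
move=> sW [_ pXW] ST SXS U UU k.
have RS : SX *m X *m SX = 1%:M := SXS.
have inv : (SX *m X) *m SX = 1%:M := SXS.
rewrite col_qf; have x1 := col_unit k UU.
have xnz : col k U != 0.
  apply/eqP => x0; move: x1; rewrite x0 mulmx0 mxE => /eqP.
  by rewrite eq_sym oner_eq0.
move: (col k U) x1 xnz => x x1 xnz.
have [_ pos] := spd_conj sW ST inv.
apply/andP; split; first exact: pos.
have := pXW (SX *m x).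
have -> : (SX *m x)^T *m (X - W) *m (SX *m x)
   = x^T *m (SX *m X *m SX) *m x - x^T *m (SX *m W *m SX) *m x.
  by rewrite trmx_mul ST mulmxBr mulmxBl !mulmxA.
by rewrite SXS mulmx1 mxE [(x^T *m x) 0 0]x1 mxE subr_ge0.
Qed.

End A.

Unset Implicit Arguments.

Theorem theorem1 (R : realType) (d n : nat) (X : 'M[R]_d) (B : 'I_n -> 'M[R]_d) :
  spd X -> (forall i, spd (B i)) ->
  forall (alpha beta : 'rV[R]_n) (t : R),
    setA B X alpha -> setA B X beta -> 0 <= t -> t <= 1 ->
    phi B X ((1 - t) *: alpha + t *: beta)
      <= (1 - t) * phi B X alpha + t * phi B X beta.
Proof.
move=> sX _ alpha beta t [lea [_ sWa]] [leb [_ sWb]] t0 t1.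
have WgE : wsum B ((1 - t) *: alpha + t *: beta)
           = (1 - t) *: wsum B alpha + t *: wsum B beta.
  rewrite /wsum !scaler_sumr -big_split /=; apply: eq_bigr => i _.
  by rewrite !mxE [LHS]scalerDl !scalerA.
have sWg : spd (wsum B ((1 - t) *: alpha + t *: beta)).
  rewrite WgE; case: sWa => syA pA; case: sWb => syB pB; split.
    by rewrite /symmetric_mx linearD /= !linearZ /= syA syB.
  move=> x xnz; rewrite mulmxDr mulmxDl -!scalemxAr -!scalemxAl comb_entry.
  by apply: conv_pos => //; [apply: pA | apply: pB].
rewrite /phi.
set Wa := wsum B alpha in lea sWa WgE *.
set Wb := wsum B beta in leb sWb WgE *.
set Wg := wsum B _ in sWg WgE *.
have [RX [RXT SXT SR RS RR]] := isqrt_facts sX.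
set SX := invsqrtm X in SXT SR RS *.
have SXS : SX *m X *m SX = 1%:M by rewrite -RR mulmxA SR mul1mx RS.
have YgE : SX *m Wg *m SX = (1 - t) *: (SX *m Wa *m SX) + t *: (SX *m Wb *m SX).
  by rewrite WgE mulmxDr -!scalemxAr mulmxDl -!scalemxAl.
have sYa := spd_conj sWa SXT RS.
have sYb := spd_conj sWb SXT RS.
have sYg := spd_conj sWg SXT RS.
have sda := eps_decP (spd_sym sYa).
have sdb := eps_decP (spd_sym sYb).
have sdg := eps_decP (spd_sym sYg).
rewrite (phi_eq sWg sX sdg) (phi_eq sWa sX sda) (phi_eq sWb sX sdb).
set Ya := SX *m Wa *m SX in sda sYa YgE *.
set Yb := SX *m Wb *m SX in sdb sYb YgE *.
set Yg := SX *m Wg *m SX in sdg sYg YgE *.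
set Q := (eps_dec Yg).1.
have QQ : Q^T *m Q = 1%:M := orthT sdg.1.
have lamk : forall k, (eps_dec Yg).2 0 k
    = (1 - t) * (Q^T *m Ya *m Q) k k + t * (Q^T *m Yb *m Q) k k.
  move=> k; have := pdp_diag sdg => /matrixP /(_ k k).
  rewrite [diag_mx _ _ _]mxE eqxx mulr1n => <-.
  by rewrite -/Q YgE mulmxDr -!scalemxAr mulmxDl -!scalemxAl comb_entry.
have bA := Ybound sWa lea SXT SXS.
have bB := Ybound sWb leb SXT SXS.
have muA : forall j, 0 < (eps_dec Ya).2 0 j <= 1.
  move=> j; have := pdp_diag sda => /matrixP /(_ j j).
  rewrite [diag_mx _ _ _]mxE eqxx mulr1n => <-; apply: bA; exact: orthT sda.1.
have muB : forall j, 0 < (eps_dec Yb).2 0 j <= 1.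
  move=> j; have := pdp_diag sdb => /matrixP /(_ j j).
  rewrite [diag_mx _ _ _]mxE eqxx mulr1n => <-; apply: bB; exact: orthT sdb.1.
apply: (le_trans (y := \sum_k ((1 - t) * ln ((Q^T *m Ya *m Q) k k) ^+ 2
                             + t * ln ((Q^T *m Yb *m Q) k k) ^+ 2))).
  by apply: ler_sum => k _; rewrite lamk; apply: two_point => //; [apply: bA | apply: bB].
rewrite big_split /= -!mulr_sumr; apply: lerD; apply: ler_wpM2l.
- by rewrite subr_ge0.
- exact: pinch sda muA QQ (bA Q QQ).
- done.
- exact: pinch sdb muB QQ (bB Q QQ).
Qed.
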